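(* With respect to the box topology on $\mathcal{X}_*$, there is no continuous map $r\colon\mathcal{X}_*\to\mathbb{R}_+$ that is $1$-homogeneous, i.e. satisfies $r(tX)=t\,r(X)$ for all $t>0$ and $X\in\mathcal{X}_*$.
   Context: mm-spaces are triples $(X,d_X,\mu_X)$ with $(X,d_X)$ complete separable metric and $\mu_X$ a Borel probability measure, with $X=\operatorname{supp}\mu_X$. $\mathcal{X}$ is the set of their isomorphism classes under measure-preserving isometries of supports. Box distance: $\square(X,Y)$ is the infimum of $\varepsilon\ge0$ such that there exist Borel maps $\varphi,\psi$ from $[0,1)$ pushing Lebesgue measure to $\mu_X,\mu_Y$ and a Borel $I_0$ of measure $\ge1-\varepsilon$ with $|d_X(\varphi(s),\varphi(t))-d_Y(\psi(s),\psi(t))|\le\varepsilon$ on $I_0$. It induces the box topology. $tX=(X,t\,d_X,\mu_X)$ for $t\in\mathbb{R}_+=(0,\infty)$. $\mathcal{X}_*=\mathcal{X}\setminus\{*\}$, where $*$ is the one-point space. *)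

(* Defs.v *)
From HB Require Import structures.
From mathcomp Require Import all_boot all_order all_algebra.
From mathcomp Require Import all_classical all_reals all_analysis.
Import Order.TTheory GRing.Theory Num.Theory.
Import numFieldNormedType.Exports.

Set Implicit Arguments.
Unset Strict Implicit.
Unset Printing Implicit Defensive.

Local Open Scope classical_set_scope.
Local Open Scope ring_scope.

Section MM.
Variable R : realType.

Definition mball (T : Type) (d : T -> T -> R) (x : T) (e : R) : set T :=
  [set y | d x y < e].
Definition dopen (T : Type) (d : T -> T -> R) (A : set T) : Prop :=
  forall x, A x -> exists2 e, 0 < e & mball d x e `<=` A.
Definition dborel (T : Type) (d : T -> T -> R) : set (set T) :=
  <<s [set A | dopen d A] >>.

Record mm_axioms (T : Type) (d : T -> T -> R) (mu : set T -> R) : Prop := {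
  mm_ge0 : forall x y, 0 <= d x y;
  mm_eq0 : forall x y, d x y = 0 <-> x = y;
  mm_sym : forall x y, d x y = d y x;
  mm_tri : forall x y z, d x z <= d x y + d y z;
  mm_complete : forall u : nat -> T,
    (forall e, 0 < e -> exists N, forall m n, (N <= m)%N -> (N <= n)%N ->
        d (u m) (u n) < e) ->
    exists x, forall e, 0 < e -> exists N, forall n, (N <= n)%N -> d (u n) x < e;
  mm_separable : exists f : nat -> T,
    forall x e, 0 < e -> exists n, d x (f n) < e;
  mm_mu_ge0 : forall A, dborel d A -> 0 <= mu A;
  mm_mu_setT : mu setT = 1;
  mm_mu_sigma_additive : forall F : nat -> set T,
    (forall i, dborel d (F i)) -> trivIset setT F ->
    (fun n => \sum_(i < n) mu (F i)) @ \oo --> mu (\bigcup_i F i);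
  mm_full_support : forall x e, 0 < e -> 0 < mu (mball d x e)
}.

Record mmspace := MMSpace {
  mm_T : Type;
  mm_d : mm_T -> mm_T -> R;
  mm_mu : set mm_T -> R;
  mm_ax : mm_axioms mm_d mm_mu
}.
Arguments mm_d : clear implicits.
Arguments mm_mu : clear implicits.

(* X is not (isomorphic to) the one-point mm-space *)
Definition nontrivial (X : mmspace) : Prop :=
  exists x y : mm_T X, x <> y.

Definition unit_interval : set R := [set s | 0 <= s < 1].

Definition parametrization (X : mmspace) (phi : R -> mm_T X) : Prop :=
  forall A, dborel (mm_d X) A ->
    measurable (unit_interval `&` phi @^-1` A) /\
    lebesgue_measure (unit_interval `&` phi @^-1` A) = (mm_mu X A)%:E.

Definition box (X Y : mmspace) : R :=
  inf [set e : R | 0 <= e /\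
    exists (phi : R -> mm_T X) (psi : R -> mm_T Y) (I0 : set R),
      [/\ parametrization phi, parametrization psi,
          measurable I0 /\ I0 `<=` unit_interval,
          ((1 - e)%:E <= lebesgue_measure I0)%E &
          forall s t, I0 s -> I0 t ->
            `|mm_d X (phi s) (phi t) - mm_d Y (psi s) (psi t)| <= e]].

Lemma mball_scale (T : Type) (d : T -> T -> R) (t : R) (ht : 0 < t) x e :
  mball (fun x y => t * d x y) x e = mball d x (e / t).
Proof.
rewrite /mball; apply/seteqP; split => y /=.
  by move=> h; rewrite ltr_pdivlMr // mulrC.
by rewrite ltr_pdivlMr // mulrC.
Qed.

Lemma dopen_scale (T : Type) (d : T -> T -> R) (t : R) (ht : 0 < t) :
  dopen (fun x y => t * d x y) = dopen d.
Proof.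
apply/funext => A; apply/propext; split => h x Ax.
  have [e e0 he] := h x Ax; exists (e / t); first by rewrite divr_gt0.
  by rewrite -mball_scale.
have [e e0 he] := h x Ax; exists (e * t); first by rewrite mulr_gt0.
by rewrite mball_scale // mulfK // gt_eqF.
Qed.

Lemma dborel_scale (T : Type) (d : T -> T -> R) (t : R) (ht : 0 < t) :
  dborel (fun x y => t * d x y) = dborel d.
Proof. by rewrite /dborel dopen_scale. Qed.

Lemma mm_axioms_scale (T : Type) (d : T -> T -> R) (mu : set T -> R)
  (t : R) (ht : 0 < t) :
  mm_axioms d mu -> mm_axioms (fun x y => t * d x y) mu.
Proof.
case=> h0 h1 h2 h3 hc hs m0 m1 m2 m3; split.
- by move=> x y; rewrite mulr_ge0 // ltW.
- move=> x y; rewrite -h1; split; last by move=> ->; rewrite mulr0.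
  by move/eqP; rewrite mulf_eq0 gt_eqF //= => /eqP.
- by move=> x y; rewrite h2.
- by move=> x y z; rewrite -mulrDr ler_wpM2l // ltW.
- move=> u hu; have [x hx] : exists x, forall e, 0 < e -> exists N,
      forall n, (N <= n)%N -> d (u n) x < e.
    apply: hc => e e0; have [N hN] := hu (e * t) (mulr_gt0 e0 ht).
    by exists N => m n hm hn; rewrite -(ltr_pM2l ht) [t * e]mulrC; apply: hN.
  exists x => e e0; have [N hN] := hx (e / t) (divr_gt0 e0 ht).
  by exists N => n hn; rewrite mulrC -ltr_pdivlMr //; apply: hN.
- have [f hf] := hs; exists f => x e e0.
  have [n hn] := hf x (e / t) (divr_gt0 e0 ht).
  by exists n; rewrite mulrC -ltr_pdivlMr.
- by rewrite dborel_scale.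
- exact: m1.
- by rewrite dborel_scale.
- by move=> x e e0; rewrite mball_scale //; apply: m3; rewrite divr_gt0.
Qed.

Definition scale (t : R) (ht : 0 < t) (X : mmspace) : mmspace :=
  @MMSpace (mm_T X) (fun x y => t * mm_d X x y) (mm_mu X)
    (mm_axioms_scale ht (mm_ax X)).

End MM.

(* Main.v *)
Require Import Defs.
From mathcomp Require Import all_boot all_order all_algebra.
From mathcomp Require Import all_classical all_reals all_analysis.
From mathcomp Require Import lra.
Import Order.TTheory GRing.Theory Num.Theory.
Local Open Scope ring_scope.
Local Open Scope classical_set_scope.
Set Implicit Arguments.
Unset Strict Implicit.

Section Fin.
Variable R : realType.
Variable n : nat.
Implicit Types w : 'I_n.+1 -> R.

Definition finmu w (A : set 'I_n.+1) : R := \sum_(i | `[< A i >]) w i.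

Lemma finmuE w A : finmu w A = \sum_i (if `[< A i >] then w i else 0).
Proof. by rewrite /finmu big_mkcond. Qed.

Lemma fin_axioms w (d : 'I_n.+1 -> 'I_n.+1 -> R) :
  (forall i, 0 < w i) -> \sum_i w i = 1 ->
  (forall x y, 0 <= d x y) ->
  (forall x y, d x y = 0 <-> x = y) ->
  (forall x y, d x y = d y x) ->
  (forall x y z, d x z <= d x y + d y z) ->
  (exists2 m, 0 < m & forall x y, x <> y -> m <= d x y) ->
  mm_axioms d (finmu w).
Proof.
move=> hw hw1 h0 heq hsym htri [m m0 hm].
have dxx x : d x x = 0 by apply/heq.
split => //.
- move=> u hu; have [N hN] := hu m m0.
  exists (u N) => e e0; exists N => k hk.
  have -> : u k = u N.
    apply/eqP/negPn/negP => /eqP hne.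
    by have := hN k N hk (leqnn N); rewrite ltNge (hm _ _ hne).
  by rewrite dxx.
- exists (fun k => inord k) => x e e0; exists x; by rewrite inord_val dxx.
- by move=> A _; apply: sumr_ge0 => i _; apply: ltW.
- by rewrite /finmu -hw1; apply: eq_bigl => i; apply/asboolP.
- move=> F _ tF.
  have key : forall x, exists N, forall k, (N <= k)%N ->
      \sum_(i < k) (if `[< F i x >] then w x else 0) =
      (if `[< (\bigcup_i F i) x >] then w x else 0).
    move=> x; case: (pselect ((\bigcup_i F i) x)) => hx.
    + rewrite asboolT //; case: hx => j _ Fjx; exists j.+1 => k hk.
      rewrite (bigD1 (Ordinal hk)) //= asboolT // big1 ?addr0 // => i hi.
      case: asboolP => // Fix; exfalso; move/eqP: hi; apply.
      apply/val_inj => /=; apply: (tF i j) => //; by exists x.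
    + rewrite asboolF //; exists 0%N => k _; apply: big1 => i _.
      case: asboolP => // Fix; exfalso; apply: hx; by exists i.
  have [Nf hNf] := choice key.
  apply: cvg_near_cst; exists (\max_x Nf x)%N => // k /= hk.
  rewrite finmuE.
  under eq_bigr do rewrite finmuE.
  rewrite exchange_big /=; apply: eq_bigr => x _.
  apply: hNf; apply: leq_trans hk; exact: leq_bigmax.
- move=> x e e0; rewrite /finmu (bigD1 x) /=; last by apply/asboolP; rewrite /mball /= dxx.
  apply: (lt_le_trans (hw x)); rewrite lerDl; apply: sumr_ge0 => i _; exact: ltW.
Qed.

Lemma param_fin w (phi : R -> 'I_n.+1) :
  (forall x : 'I_n.+1, measurable (@unit_interval R `&` phi @^-1` [set x]) /\
     lebesgue_measure (@unit_interval R `&` phi @^-1` [set x]) = (w x)%:E) ->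
  forall A, measurable (@unit_interval R `&` phi @^-1` A) /\
     lebesgue_measure (@unit_interval R `&` phi @^-1` A) = (finmu w A)%:E.
Proof.
move=> h A.
pose G (x : 'I_n.+1) := if `[< A x >] then @unit_interval R `&` phi @^-1` [set x] else set0.
have GM : forall x, measurable (G x).
  by move=> x; rewrite /G; case: asboolP => _; [exact: (h x).1 | exact: measurable0].
have UE : @unit_interval R `&` phi @^-1` A = \big[setU/set0]_(x < n.+1) G x.
  apply/seteqP; split => s.
    move=> [Us As]; rewrite -bigcup_mkord_ord; exists (val (phi s)).
      exact: ltn_ord.
    by rewrite inord_val /G asboolT.
  rewrite -bigcup_mkord_ord => -[x _]; rewrite /G; case: asboolP => Ax; last by [].
  by move=> [Us /= ->]; split.
rewrite UE; split; first by apply: bigsetU_measurable => x _.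
rewrite measure_semi_additive_ord //.
- rewrite finmuE -sumEFin; apply: eq_bigr => x _; rewrite /G.
  by case: asboolP => _; [exact: (h x).2 | exact: measure0].
- move=> x y _ _ [s []]; rewrite /G.
  case: asboolP => _; last by [].
  case: asboolP => _; last by [].
  by move=> [_ /= <-] [_ /= <-].
- apply: bigsetU_measurable => x _. exact: GM.
Qed.
End Fin.

Lemma box_le (R : realType) (X Y : mmspace R) (e : R) phi psi (I0 : set R) :
  0 <= e -> parametrization phi -> parametrization psi ->
  measurable I0 -> I0 `<=` @unit_interval R ->
  ((1 - e)%:E <= lebesgue_measure I0)%E ->
  (forall s t, I0 s -> I0 t ->
      `|@mm_d R X (phi s) (phi t) - @mm_d R Y (psi s) (psi t)| <= e) ->
  box X Y <= e.
Proof.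
move=> e0 hphi hpsi mI sI mu hd; rewrite /box; apply: ge_inf.
  by exists 0 => y [].
by split => //; exists phi, psi, I0; split.
Qed.

Lemma leb_itv (R : realType) (a b : R) : a <= b ->
  lebesgue_measure `[a, b[ = (b - a)%:E.
Proof.
rewrite lebesgue_measure_itv /= lte_fin le_eqVlt => /orP [/eqP ->|->] //.
by rewrite ltxx subrr.
Qed.

Section Sp.
Variable R : realType.

Definition d2 (i j : 'I_2) : R := if i == j then 0 else 1.
Definition w2 (a : R) (i : 'I_2) : R := if val i == 0%N then a else 1 - a.
Definition d3 (eps : R) (i j : 'I_3) : R :=
  if i == j then 0 else if (val i == 0%N) || (val j == 0%N) then 1 else eps.
Definition w3 (p : R) (i : 'I_3) : R :=
  if val i == 0%N then p else if val i == 1%N then 2^-1 - p else 2^-1.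

Lemma ax2 (a : R) : 0 < a < 1 -> mm_axioms d2 (finmu (w2 a)).
Proof.
move=> /andP [a0 a1]; apply: fin_axioms.
- by case => -[|[|?]] hi //=; rewrite ?subr_gt0.
- by rewrite !big_ord_recl big_ord0 /w2 /=; lra.
- by move=> x y; rewrite /d2; case: eqP.
- move=> x y; rewrite /d2; case: eqP => [->|hne]; first by []. split; [move=> h; exfalso; move: h; lra | by move=> /hne].
- by move=> x y; rewrite /d2 eq_sym.
- case => -[|[|?]] hx; case => -[|[|?]] hy; case => -[|[|?]] hz //=; rewrite /d2 /=; lra.
- by exists 1 => // x y; rewrite /d2; case: eqP.
Qed.

Lemma ax3 (p eps : R) : 0 < p < 2^-1 -> 0 < eps <= 1 -> mm_axioms (d3 eps) (finmu (w3 p)).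
Proof.
move=> /andP [p0 p1] /andP [e0 e1]; apply: fin_axioms.
- case => -[|[|[|?]]] hi //=; rewrite /w3 /=; lra.
- by rewrite !big_ord_recl big_ord0 /w3 /=; lra.
- case => -[|[|[|?]]] hx; case => -[|[|[|?]]] hy //=; rewrite /d3 /=; lra.
- case => -[|[|[|?]]] hx; case => -[|[|[|?]]] hy //=; rewrite /d3 /=; split => //= h;
  (try by apply/val_inj); exfalso; move: h; lra.
- case => -[|[|[|?]]] hx; case => -[|[|[|?]]] hy //=.
- case => -[|[|[|?]]] hx; case => -[|[|[|?]]] hy; case => -[|[|[|?]]] hz //=; rewrite /d3 /=; lra.
- exists eps => // x y; move: x y.
  case => -[|[|[|?]]] hx; case => -[|[|[|?]]] hy //=; rewrite /d3 /= => h; try lra;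
  exfalso; apply: h; exact/val_inj.
Qed.

Lemma itv_part (S : set R) (a b : R) : S = `[a, b[%classic -> a <= b ->
  measurable S /\ lebesgue_measure S = (b - a)%:E.
Proof. by move=> -> ab; split; [exact: measurable_itv | exact: leb_itv]. Qed.

Definition o0 : 'I_3 := @Ordinal 3 0 isT.
Definition o1 : 'I_3 := @Ordinal 3 1 isT.
Definition o2 : 'I_3 := @Ordinal 3 2 isT.
Definition q0 : 'I_2 := @Ordinal 2 0 isT.
Definition q1 : 'I_2 := @Ordinal 2 1 isT.

Definition phi2 (a : R) (s : R) : 'I_2 := if s < a then q0 else q1.
Definition phi3 (p : R) (s : R) : 'I_3 := if s < p then o0 else if s < 2^-1 then o1 else o2.

Lemma preim_itv (T : Type) (phi : R -> T) x a b : 0 <= a -> a <= b -> b <= 1 ->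
  (forall s, 0 <= s -> s < 1 -> (phi s = x <-> a <= s /\ s < b)) ->
  measurable (@unit_interval R `&` phi @^-1` [set x]) /\
  lebesgue_measure (@unit_interval R `&` phi @^-1` [set x]) = (b - a)%:E.
Proof.
move=> a0 ab b1 h; apply: itv_part => //.
apply/seteqP; split => s; rewrite /unit_interval /preimage /= in_itv /=.
  move=> [/andP [s0 s1] hs]; have [? ?] := (h s s0 s1).1 hs.
  by apply/andP; split.
move=> /andP [s0 s1]; have s0' : 0 <= s by apply: le_trans s0.
have s1' : s < 1 by apply: lt_le_trans b1.
by split; [apply/andP; split | apply/(h s s0' s1')].
Qed.

Lemma I2E (x : 'I_2) : x = q0 \/ x = q1.
Proof. by case: x => -[|[|?]] hx //; [left | right]; apply/val_inj. Qed.
Lemma I3E (x : 'I_3) : [\/ x = o0, x = o1 | x = o2].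
Proof. by case: x => -[|[|[|?]]] hx //; [apply: Or31 | apply: Or32 | apply: Or33]; apply/val_inj. Qed.

Ltac solve_pre := split; (try by []); (try by move/(congr1 val)/eqP);
  (try by (move=> _; split; lra)); (try by (move=> [? ?]; exfalso; lra)).

Lemma param2 (a : R) : 0 < a < 1 -> forall A,
  measurable (@unit_interval R `&` phi2 a @^-1` A) /\
  lebesgue_measure (@unit_interval R `&` phi2 a @^-1` A) = (finmu (w2 a) A)%:E.
Proof.
move=> /andP [a0 a1]; apply: param_fin => x; case: (I2E x) => ->.
- have -> : w2 a q0 = a - 0 by rewrite /w2 /= subr0.
  apply: preim_itv; try lra.
  by move=> s s0 s1; rewrite /phi2; case: (ltP s a) => h; solve_pre.
- have -> : w2 a q1 = 1 - a by [].
  apply: preim_itv; try lra.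
  by move=> s s0 s1; rewrite /phi2; case: (ltP s a) => h; solve_pre.
Qed.

Lemma param3 (p : R) : 0 < p < 2^-1 -> forall A,
  measurable (@unit_interval R `&` phi3 p @^-1` A) /\
  lebesgue_measure (@unit_interval R `&` phi3 p @^-1` A) = (finmu (w3 p) A)%:E.
Proof.
move=> /andP [p0 p1]; apply: param_fin => x; case: (I3E x) => ->.
- have -> : w3 p o0 = p - 0 by rewrite /w3 /= subr0.
  apply: preim_itv; try lra.
  by move=> s s0 s1; rewrite /phi3; case: (ltP s p) => h; case: (ltP s 2^-1) => h'; solve_pre.
- have -> : w3 p o1 = 2^-1 - p by [].
  apply: preim_itv; try lra.
  by move=> s s0 s1; rewrite /phi3; case: (ltP s p) => h; case: (ltP s 2^-1) => h'; solve_pre.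
- have -> : w3 p o2 = 1 - 2^-1 by rewrite /w3 /=; lra.
  apply: preim_itv; try lra.
  by move=> s s0 s1; rewrite /phi3; case: (ltP s p) => h; case: (ltP s 2^-1) => h'; solve_pre.
Qed.
End Sp.

Section M.
Variable R : realType.

Lemma box_CW (p eps : R) (h12 : 0 < 2^-1 < 1) (hp : 0 < p < 2^-1) (he : 0 < eps <= 1)
  (heps : 0 < eps^-1) :
  box (@MMSpace R _ _ _ (ax2 h12)) (scale heps (@MMSpace R _ _ _ (ax3 hp he))) <= p.
Proof.
have /andP [p0 p1] := hp; have /andP [e0 e1] := he.
set X := MMSpace _. set Y := scale _ _.
apply: (@box_le R X Y p (phi2 2^-1) (phi3 p) `[p, 1[%classic).
- exact: ltW.
- by move=> A _; apply: param2.
- by move=> A _; apply: param3.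
- exact: measurable_itv.
- by move=> s; rewrite /= in_itv /= /unit_interval => /andP [h1 h2]; apply/andP; split => //; lra.
- by rewrite leb_itv //; lra.
move=> s t; rewrite /= !in_itv /= => /andP [s0 s1] /andP [t0 t1].
rewrite /d2 /d3 /phi2 /phi3.
case: (ltP s p) => hs; try lra.
case: (ltP t p) => ht; try lra.
have hinv : eps^-1 * eps = 1 by rewrite mulVf // gt_eqF.
case: (ltP s 2^-1) => hs'; case: (ltP t 2^-1) => ht' /=; rewrite ?mulr0 ?hinv; by rewrite subrr normr0 ltW.
Qed.

Lemma unitE : @unit_interval R = `[0, 1[%classic.
Proof. by apply/seteqP; split => s; rewrite /unit_interval /= in_itv. Qed.

Lemma box_XV (p eps : R) (hp1 : 0 < p < 1) (hp : 0 < p < 2^-1) (he : 0 < eps <= 1) :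
  box (@MMSpace R _ _ _ (ax2 hp1)) (@MMSpace R _ _ _ (ax3 hp he)) <= eps.
Proof.
have /andP [p0 p1] := hp; have /andP [e0 e1] := he.
set X := MMSpace _. set Y := MMSpace _.
apply: (@box_le R X Y eps (phi2 p) (phi3 p) (@unit_interval R)).
- exact: ltW.
- by move=> A _; apply: param2.
- by move=> A _; apply: param3.
- rewrite unitE; exact: measurable_itv.
- by [].
- by rewrite unitE leb_itv // lee_fin; lra.
move=> s t; rewrite /= /unit_interval => /andP [s0 s1] /andP [t0 t1].
rewrite /d2 /d3 /phi2 /phi3.
case: (ltP s p) => hs; case: (ltP t p) => ht;
case: (ltP s 2^-1) => hs'; case: (ltP t 2^-1) => ht' /=;
  rewrite ?subrr ?normr0 ?sub0r ?normrN ?(gtr0_norm e0); lra.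
Qed.

End M.
Unset Implicit Arguments.
Local Close Scope classical_set_scope.


Lemma nt2 (R : realType) (a : R) (h : 0 < a < 1) : nontrivial (@MMSpace R _ _ _ (ax2 h)).
Proof. by exists q0, q1 => /(congr1 val). Qed.

Lemma nt3 (R : realType) (p eps : R) (hp : 0 < p < 2^-1) (he : 0 < eps <= 1) :
  nontrivial (@MMSpace R _ _ _ (ax3 hp he)).
Proof. by exists o0, o1 => /(congr1 val). Qed.

Theorem corollary3p9 (R : realType) :
  ~ exists r : mmspace R -> R,
      [/\ (* r takes values in R_+ = (0, oo) on X_* *)
          forall X, nontrivial X -> 0 < r X,
          (* r is continuous on X_* for the box topology *)
          forall X, nontrivial X -> forall eps, 0 < eps ->
            exists2 delta, 0 < delta &
              forall Y, nontrivial Y -> box X Y < delta -> `|r X - r Y| < eps &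
          (* r is 1-homogeneous *)
          forall (t : R) (ht : 0 < t) X, nontrivial X ->
            r (scale ht X) = t * r X].
Proof.
move=> [r [rpos rcont rhom]].
have h12 : 0 < (2^-1 : R) < 1 by apply/andP; split; lra.
set C := @MMSpace R _ _ _ (ax2 h12).
have ntC : nontrivial C by exact: nt2.
have rC0 := rpos C ntC.
have [d1 d10 H1] := rcont C ntC 1 ltr01.
pose p := Num.min (d1 / 2) (4^-1).
have pd1 : p <= d1 / 2 by rewrite ge_min lexx.
have p4 : p <= 4^-1 by rewrite ge_min lexx orbT.
have p0 : 0 < p by rewrite lt_min; apply/andP; split; lra.
have hp1 : 0 < p < 1 by apply/andP; split; lra.
have hp : 0 < p < 2^-1 by apply/andP; split; lra.
set Xp := @MMSpace R _ _ _ (ax2 hp1).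
have ntX : nontrivial Xp by exact: nt2.
have g0 := rpos Xp ntX.
have [d2 d20 H2] := rcont Xp ntX (r Xp / 2) ltac:(lra).
have k0 : 0 < 2 * (r C + 1) by lra.
pose eps := Num.min (Num.min (d2 / 2) 1) (r Xp / (2 * (r C + 1))).
have ed2 : eps <= d2 / 2 by rewrite !ge_min lexx.
have e1 : eps <= 1 by rewrite !ge_min lexx !orbT.
have eg : eps <= r Xp / (2 * (r C + 1)) by rewrite !ge_min lexx !orbT.
have e0 : 0 < eps by rewrite !lt_min; apply/andP; split; [apply/andP; split|]; 
  [lra | lra | exact: divr_gt0].
have eg' : eps * (2 * (r C + 1)) <= r Xp by rewrite -ler_pdivlMr.
have he : 0 < eps <= 1 by apply/andP; split.
set V := @MMSpace R _ _ _ (ax3 hp he).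
have ntV : nontrivial V by exact: nt3.
have heps : 0 < eps^-1 by rewrite invr_gt0.
set W := scale heps V.
have ntW : nontrivial W by exact: nt3.
have bXV : box Xp V < d2 by have := @box_XV R p eps hp1 hp he; rewrite -/Xp -/V; lra.
have bCW : box C W < d1 by have := @box_CW R p eps h12 hp he heps; rewrite -/C -/V -/W; lra.
have := H2 V ntV bXV; rewrite ltr_norml => /andP [hV1 hV2].
have := H1 W ntW bCW; rewrite ltr_norml => /andP [hW1 hW2].
have rW : r W = eps^-1 * r V by rewrite /W rhom.
have rV : r V = eps * r W by rewrite rW mulrA mulfV ?mul1r // gt_eqF.
nra.
Qed.
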